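(* Let $p,q$ be odd primes with $q-p=2$, let $\varepsilon\in\{1,-1\}$, let $D=D_1\cdots D_n$ ($n\ge 0$) be a product of distinct odd primes with $\gcd(pq,D)=1$, and let $E_D/\mathbb{Q}$ be the elliptic curve $y^2=x(x+\varepsilon pD)(x+\varepsilon qD)$. Then $E_D$ has no anomalous primes, i.e. $\mathrm{Anom}(E_D/\mathbb{Q})=\emptyset$.
   Context: A prime $l$ is anomalous for an elliptic curve $E/\mathbb{Q}$ if $E$ has good reduction at $l$ and $\#\widetilde{E}_l(\mathbb{F}_l)\equiv 0\pmod l$, where $\widetilde{E}_l$ is the reduction of $E$ modulo $l$. $\mathrm{Anom}(E/\mathbb{Q})$ denotes the set of anomalous primes for $E$. *)

(* Defs.v *)
From HB Require Import structures.
From mathcomp Require Import all_boot all_order all_algebra.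
Set Implicit Arguments. Unset Strict Implicit. Unset Printing Implicit Defensive.
Import Order.TTheory GRing.Theory Num.Theory.
Local Open Scope ring_scope.

(* y^2 + a1 x y + a3 y = x^3 + a2 x^2 + a4 x + a6 over Q *)
Record wmodel := WModel { wa1 : rat; wa2 : rat; wa3 : rat; wa4 : rat; wa6 : rat }.

Definition weq (E : wmodel) (x y : rat) : rat :=
  y ^+ 2 + wa1 E * x * y + wa3 E * y
  - (x ^+ 3 + wa2 E * x ^+ 2 + wa4 E * x + wa6 E).

(* standard discriminant (Silverman III.1) *)
Definition wdisc (E : wmodel) : rat :=
  let b2 := wa1 E ^+ 2 + 4 * wa2 E in
  let b4 := 2 * wa4 E + wa1 E * wa3 E in
  let b6 := wa3 E ^+ 2 + 4 * wa6 E in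
  let b8 := wa1 E ^+ 2 * wa6 E + 4 * wa2 E * wa6 E - wa1 E * wa3 E * wa4 E
            + wa2 E * wa3 E ^+ 2 - wa4 E ^+ 2 in
  - b2 ^+ 2 * b8 - 8 * b4 ^+ 3 - 27 * b6 ^+ 2 + 9 * b2 * b4 * b6.

Definition iso_models (E E' : wmodel) : Prop :=
  exists u r s t : rat, u != 0 /\
    forall X Y : rat,
      weq E (u ^+ 2 * X + r) (u ^+ 3 * Y + s * u ^+ 2 * X + t)
      = u ^+ 6 * weq E' X Y.

Definition integral_at (l : nat) (c : rat) : bool := ~~ (l %| `|denq c|)%N.

Definition good_model_at (l : nat) (E : wmodel) : bool :=
  [&& integral_at l (wa1 E), integral_at l (wa2 E), integral_at l (wa3 E),
      integral_at l (wa4 E), integral_at l (wa6 E)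
    & ~~ (l %| `|numq (wdisc E)|)%N].

Definition redF (l : nat) (c : rat) : 'F_l := (numq c)%:~R / (denq c)%:~R.

(* number of F_l-points (affine points plus the point at infinity) of the
   reduction modulo l of the model E *)
Definition npoints (l : nat) (E : wmodel) : nat :=
  (#|[set P : 'F_l * 'F_l |
      P.2 ^+ 2 + redF l (wa1 E) * P.1 * P.2 + redF l (wa3 E) * P.2
      == P.1 ^+ 3 + redF l (wa2 E) * P.1 ^+ 2 + redF l (wa4 E) * P.1
         + redF l (wa6 E)]|).+1.

(* l is anomalous for E: E has good reduction at l (some model of E is good
   at l) and #E~_l(F_l) = 0 mod l, counted on such a good model (the count
   does not depend on the good model chosen). *)
Definition anomalous (E : wmodel) (l : nat) : Prop :=
  prime l /\ exists E', iso_models E E' /\ good_model_at l E' /\ (l %| npoints l E')%N.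

(* E_D : y^2 = x (x + eps p D) (x + eps q D) = x^3 + eps(p+q)D x^2 + pqD^2 x *)
Definition E_D (eps : rat) (p q D : nat) : wmodel :=
  WModel 0 (eps * (p + q)%:R * D%:R) 0 ((p * q)%:R * D%:R ^+ 2) 0.

(* Main.v *)
Require Import Defs.
From HB Require Import structures.
From mathcomp Require Import all_boot all_order all_algebra.
From mathcomp Require Import all_field ring lra zify.
Import Order.TTheory GRing.Theory Num.Theory.
Local Open Scope ring_scope.

Lemma intr_Fp_eq0 (l : nat) (z : int) : prime l ->
  ((z%:~R : 'F_l) == 0) = (l %| `|z|)%N.
Proof.
move=> pl; case: z => n; last rewrite NegzE.
  by rewrite /= (dvdn_pcharf (pchar_Fp pl)).
by rewrite mulrNz oppr_eq0 abszN /= (dvdn_pcharf (pchar_Fp pl)).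
Qed.

Lemma Zl_frac (l : nat) (n d : int) : prime l -> d != 0 -> ~~ (l %| `|d|)%N ->
  integral_at l (n%:~R / d%:~R).
Proof.
move=> pl d0 ld; rewrite /integral_at; set c := _ / _.
have e : numq c * d = n * denq c.
  apply: (@intr_inj rat); rewrite !intrM numqE /c; field.
  by rewrite intr_eq0.
have : (`|denq c| %| `|numq c| * `|d|)%N.
  by rewrite -abszM e abszM dvdn_mull.
rewrite Gauss_dvdr; last by rewrite coprime_sym coprime_num_den.
move=> hd; apply/negP => hl; move/negP: ld; apply; exact: dvdn_trans hl hd.
Qed.

Lemma redF_frac (l : nat) (n d : int) : prime l -> d != 0 -> ~~ (l %| `|d|)%N ->
  redF l (n%:~R / d%:~R) = n%:~R / d%:~R.
Proof.
move=> pl d0 ld; rewrite /redF; set c := (n%:~R / d%:~R : rat).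
have e : numq c * d = n * denq c.
  apply: (@intr_inj rat); rewrite !intrM numqE /c; field.
  by rewrite intr_eq0.
have hc := @Zl_frac l n d pl d0 ld; rewrite /integral_at -/c in hc.
have h1 : (d%:~R : 'F_l) != 0 by rewrite intr_Fp_eq0.
have h2 : ((denq c)%:~R : 'F_l) != 0 by rewrite intr_Fp_eq0.
apply/eqP; rewrite eqr_div // -!intrM e mulrC //.
Qed.

Lemma ndvd_mul (l : nat) (x y : int) : prime l -> ~~ (l %| `|x|)%N -> ~~ (l %| `|y|)%N ->
  ~~ (l %| `|(x * y)%R|)%N.
Proof. by move=> pl hx hy; rewrite abszM Euclid_dvdM // negb_or hx hy. Qed.

Lemma Zl_add (l : nat) (a b : rat) : prime l -> integral_at l a -> integral_at l b ->
  integral_at l (a + b).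
Proof.
move=> pl ha hb.
have -> : a + b = (numq a * denq b + numq b * denq a)%:~R / (denq a * denq b)%:~R.
  rewrite intrD !intrM -{1}[a]divq_num_den -{1}[b]divq_num_den; field.
  by rewrite !intr_eq0 !denq_neq0.
by apply: Zl_frac => //; [rewrite mulf_neq0 ?denq_neq0 | apply: ndvd_mul].
Qed.

Lemma Zl_mul (l : nat) (a b : rat) : prime l -> integral_at l a -> integral_at l b ->
  integral_at l (a * b).
Proof.
move=> pl ha hb.
have -> : a * b = (numq a * numq b)%:~R / (denq a * denq b)%:~R.
  rewrite !intrM -{1}[a]divq_num_den -{1}[b]divq_num_den; field.
  by rewrite !intr_eq0 !denq_neq0.
by apply: Zl_frac => //; [rewrite mulf_neq0 ?denq_neq0 | apply: ndvd_mul].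
Qed.

Lemma Zl_opp (l : nat) (a : rat) : integral_at l a -> integral_at l (- a).
Proof. by rewrite /integral_at denqN. Qed.

Lemma Zl_int (l : nat) (z : int) : prime l -> integral_at l z%:~R.
Proof.
by move=> pl; rewrite /integral_at denq_int /= dvdn1; case: eqP pl => // ->.
Qed.

Lemma Zl_nat (l : nat) (n : nat) : prime l -> integral_at l n%:R.
Proof. by move=> pl; rewrite -[n%:R]/((n%:Z)%:~R : rat); apply: Zl_int. Qed.

Lemma Zl_sub (l : nat) (a b : rat) : prime l -> integral_at l a -> integral_at l b ->
  integral_at l (a - b).
Proof. by move=> pl ha hb; apply: Zl_add => //; apply: Zl_opp. Qed.

Lemma Zl_exp (l : nat) (a : rat) (k : nat) : prime l -> integral_at l a ->
  integral_at l (a ^+ k).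
Proof.
move=> pl ha; elim: k => [|k IH]; first by rewrite expr0 -[1]/(1%:R); apply: Zl_nat.
by rewrite exprS; apply: Zl_mul.
Qed.

Lemma denFl_neq0 (l : nat) (a : rat) : prime l -> integral_at l a ->
  ((denq a)%:~R : 'F_l) != 0.
Proof. by move=> pl ha; rewrite intr_Fp_eq0. Qed.

Lemma redF_add (l : nat) (a b : rat) : prime l -> integral_at l a -> integral_at l b ->
  redF l (a + b) = redF l a + redF l b.
Proof.
move=> pl ha hb.
have -> : a + b = (numq a * denq b + numq b * denq a)%:~R / (denq a * denq b)%:~R.
  rewrite intrD !intrM -{1}[a]divq_num_den -{1}[b]divq_num_den; field.
  by rewrite !intr_eq0 !denq_neq0.
rewrite redF_frac //; last by apply: ndvd_mul.
  rewrite /redF intrD !intrM; field.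
  by rewrite !denFl_neq0.
by rewrite mulf_neq0 ?denq_neq0.
Qed.

Lemma redF_mul (l : nat) (a b : rat) : prime l -> integral_at l a -> integral_at l b ->
  redF l (a * b) = redF l a * redF l b.
Proof.
move=> pl ha hb.
have -> : a * b = (numq a * numq b)%:~R / (denq a * denq b)%:~R.
  rewrite !intrM -{1}[a]divq_num_den -{1}[b]divq_num_den; field.
  by rewrite !intr_eq0 !denq_neq0.
rewrite redF_frac //; last by apply: ndvd_mul.
  rewrite /redF !intrM; field.
  by rewrite !denFl_neq0.
by rewrite mulf_neq0 ?denq_neq0.
Qed.

Lemma redF_opp (l : nat) (a : rat) : redF l (- a) = - redF l a.
Proof. by rewrite /redF numqN denqN intrN mulNr. Qed.

Lemma redF_sub (l : nat) (a b : rat) : prime l -> integral_at l a -> integral_at l b ->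
  redF l (a - b) = redF l a - redF l b.
Proof. by move=> pl ha hb; rewrite redF_add ?redF_opp //; apply: Zl_opp. Qed.

Lemma redF_nat (l : nat) (n : nat) : redF l n%:R = n%:R.
Proof.
rewrite /redF -[n%:R]/((n%:Z)%:~R : rat) numq_int denq_int divr1 //.
Qed.

Lemma redF_exp (l : nat) (a : rat) (k : nat) : prime l -> integral_at l a ->
  redF l (a ^+ k) = redF l a ^+ k.
Proof.
move=> pl ha; elim: k => [|k IH]; first by rewrite !expr0 -[1]/(1%:R) redF_nat.
by rewrite !exprS redF_mul ?IH //; apply: Zl_exp.
Qed.

Lemma Zl_root (l k : nat) (c al be ga : rat) : prime l -> ~~ (l %| k)%N ->
  integral_at l al -> integral_at l be -> integral_at l ga ->
  k%:R * c ^+ 3 + al * c ^+ 2 + be * c + ga = 0 -> integral_at l c.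
Proof.
move=> pl lk hal hbe hga H.
pose n := numq c; pose d := denq c.
pose w := al * (n%:~R) ^+ 2 + be * n%:~R * d%:~R + ga * (d%:~R) ^+ 2.
have hw : integral_at l w.
  by rewrite /w; repeat (apply: Zl_add || apply: Zl_mul || apply: Zl_exp || apply: Zl_int).
have e1 : (k%:R * (n%:~R) ^+ 3 + (d%:~R) * w = 0 :> rat).
  rewrite /w /n numqE -/d.
  transitivity ((d%:~R : rat) ^+ 3 * (k%:R * c ^+ 3 + al * c ^+ 2 + be * c + ga)).
    by ring.
  by rewrite H mulr0.
have e : (k%:Z * n ^+ 3 * denq w = - (d * numq w))%R.
  apply: (@intr_inj rat); rewrite !intrM intrN intrM (numqE w).
  transitivity ((k%:R * n%:~R ^+ 3 + d%:~R * w) * (denq w)%:~R - d%:~R * w * (denq w)%:~R : rat).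
    by ring.
  by rewrite e1; ring.
rewrite /integral_at -/d; apply/negP => hd.
have : (l %| `|(k%:Z * n ^+ 3 * denq w)%R|)%N.
  by rewrite e abszN abszM dvdn_mulr.
rewrite abszM (abszM (k%:Z)) Euclid_dvdM // Euclid_dvdM // abszX Euclid_dvdX //.
case/orP => [/orP [] |].
- by move/negP: lk.
- move=> /andP [hn _]; have := coprime_num_den c; rewrite -/n -/d /coprime => /eqP cop.
  have : (l %| gcdn `|n| `|d|)%N by rewrite dvdn_gcd hn hd.
  rewrite cop dvdn1 => /eqP l1.
  by rewrite l1 in pl.
- by move/negP: hw.
Qed.

Lemma key_id (a b u r s t : rat) (E' : wmodel) : u != 0 ->
  (forall X Y : rat, weq (WModel 0 (a + b) 0 (a * b) 0) (u ^+ 2 * X + r)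
     (u ^+ 3 * Y + s * u ^+ 2 * X + t) = u ^+ 6 * weq E' X Y) ->
  forall X : rat,
  (wa1 E' * X + wa3 E') ^+ 2 + 4 * (X ^+ 3 + wa2 E' * X ^+ 2 + wa4 E' * X + wa6 E')
  = 4 * ((X - (- r) / u ^+ 2) * (X - (- a - r) / u ^+ 2) * (X - (- b - r) / u ^+ 2)).
Proof.
move=> u0 H X.
have H0 := H X 0; have H1 := H X 1; rewrite /weq /= in H0 H1.
set B := wa1 E' * X + wa3 E'.
set g' := X ^+ 3 + wa2 E' * X ^+ 2 + wa4 E' * X + wa6 E'.
set c := s * u ^+ 2 * X + t.
set x := u ^+ 2 * X + r.
have E0 : u ^+ 6 * g' = x ^+ 3 + (a + b) * x ^+ 2 + a * b * x - c ^+ 2.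
  rewrite /g' /c /x; rewrite /c /x in H0; lra.
have hB6 : u ^+ 6 * B = 2 * u ^+ 3 * c.
  rewrite /B /c /x; rewrite /c /x in H0 H1; lra.
have hB : u ^+ 3 * B = 2 * c.
  apply: (mulfI (expf_neq0 3 u0)); rewrite mulrA -exprD /=.
  by rewrite hB6; ring.
apply: (mulfI (expf_neq0 6 u0)).
transitivity ((u ^+ 3 * B) ^+ 2 + 4 * (u ^+ 6 * g')); first by ring.
rewrite hB E0 /x; field.
exact: u0.
Qed.

Lemma vieta (E' : wmodel) (e1 e2 e3 : rat) :
  (forall X : rat,
  (wa1 E' * X + wa3 E') ^+ 2 + 4 * (X ^+ 3 + wa2 E' * X ^+ 2 + wa4 E' * X + wa6 E')
  = 4 * ((X - e1) * (X - e2) * (X - e3))) ->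
  [/\ wa1 E' ^+ 2 + 4 * wa2 E' = - 4 * (e1 + e2 + e3),
      2 * wa4 E' + wa1 E' * wa3 E' = 2 * (e1 * e2 + e1 * e3 + e2 * e3) &
      wa3 E' ^+ 2 + 4 * wa6 E' = - 4 * (e1 * e2 * e3)].
Proof.
move=> K; have K0 := K 0; have K1 := K 1; have K2 := K (-1).
split; lra.
Qed.

Lemma disc_roots (E' : wmodel) (e1 e2 e3 : rat) :
  (forall X : rat,
  (wa1 E' * X + wa3 E') ^+ 2 + 4 * (X ^+ 3 + wa2 E' * X ^+ 2 + wa4 E' * X + wa6 E')
  = 4 * ((X - e1) * (X - e2) * (X - e3))) ->
  wdisc E' = 16 * ((e1 - e2) * (e1 - e3) * (e2 - e3)) ^+ 2.
Proof.
move=> K; case: (@vieta _ _ _ _ K) => h2 h4 h6.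
have e : 4 * wdisc E' =
  - (wa1 E' ^+ 2 + 4 * wa2 E') ^+ 2 *
    ((wa1 E' ^+ 2 + 4 * wa2 E') * (wa3 E' ^+ 2 + 4 * wa6 E') - (2 * wa4 E' + wa1 E' * wa3 E') ^+ 2)
  - 32 * (2 * wa4 E' + wa1 E' * wa3 E') ^+ 3 - 108 * (wa3 E' ^+ 2 + 4 * wa6 E') ^+ 2
  + 36 * (wa1 E' ^+ 2 + 4 * wa2 E') * (2 * wa4 E' + wa1 E' * wa3 E') * (wa3 E' ^+ 2 + 4 * wa6 E').
  by rewrite /wdisc; ring.
rewrite h2 h4 h6 in e.
apply: (mulfI (_ : (4 : rat) != 0)) => //; rewrite e; ring.
Qed.

Lemma sqcount (F : finFieldType) (B dl : F) : (2 : F) != 0 ->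
  (dl == 0 -> #|[pred y : F | (2 * y + B) ^+ 2 == dl]| = 1%N) /\
  (dl != 0 -> #|[pred y : F | (2 * y + B) ^+ 2 == dl]| = 0%N \/
              #|[pred y : F | (2 * y + B) ^+ 2 == dl]| = 2%N).
Proof.
move=> h2; split.
  move/eqP->; rewrite -[RHS](card1 (- B / 2)); apply: eq_card => y.
  rewrite !inE expf_eq0 /= addr_eq0; apply/eqP/eqP => [e|->]; [rewrite -e; field | field] => //.
move=> dl0.
case: (pickP [pred y : F | (2 * y + B) ^+ 2 == dl]) => [y0 /= /eqP hy0|none].
  right; have hne : y0 != - B - y0.
    apply/eqP => e; move: dl0; rewrite -hy0.
    have -> : 2 * y0 + B = y0 - (- B - y0) by ring.
    rewrite -e subrr.
    by rewrite expr0n /= eqxx.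
  transitivity #|pred2 y0 (- B - y0)|; last by rewrite card2 hne.
  apply: eq_card => y; rewrite !inE -hy0 eqf_sqr.
  congr (_ || _); apply/eqP/eqP => [e|->].
  - apply: (mulfI h2); by move/addIr: e.
  - by [].
  - apply: (mulfI h2); apply: (addIr B); rewrite e; ring.
  - ring.
left; apply/eqP; rewrite -leqn0 leqNgt; apply/negP => /card_gt0P [y hy].
by move: (none y); rewrite inE in hy; rewrite /= hy.
Qed.

Lemma my_gt2 (l : nat) : prime l -> odd l -> (2 < l)%N.
Proof. by case: l => [|[|[|]]]. Qed.

Lemma two_neq0 (l : nat) : prime l -> odd l -> (2 : 'F_l) != 0.
Proof.
move=> pl ol; rewrite -(dvdn_pcharf (pchar_Fp pl)).
apply/negP => /(dvdn_leq (isT : (0 < 2)%N)); rewrite leq_eqVlt ltnS.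
case/orP => [/eqP l2|]; first by rewrite l2 in ol.
by move=> /(leq_trans (prime_gt1 pl)).
Qed.

Lemma count_main (l : nat) (al1 al2 al3 al4 al6 e1 e2 e3 : 'F_l) :
  prime l -> odd l -> e1 != e2 -> e1 != e3 -> e2 != e3 ->
  (forall x, (al1 * x + al3) ^+ 2 + 4 * (x ^+ 3 + al2 * x ^+ 2 + al4 * x + al6)
             = 4 * ((x - e1) * (x - e2) * (x - e3))) ->
  ~~ (dvdn l (#|[set P : 'F_l * 'F_l | P.2 ^+ 2 + al1 * P.1 * P.2 + al3 * P.2
            == P.1 ^+ 3 + al2 * P.1 ^+ 2 + al4 * P.1 + al6]|).+1).
Proof.
move=> pl ol h12 h13 h23 hd.
have h2 := @two_neq0 l pl ol.
have h4 : (4 : 'F_l) != 0.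
  have -> : (4 : 'F_l) = 2 * 2 by rewrite -natrM.
  by rewrite mulf_neq0.
pose dl x := (al1 * x + al3) ^+ 2 + 4 * (x ^+ 3 + al2 * x ^+ 2 + al4 * x + al6).
pose c x := #|[pred y : 'F_l | (2 * y + (al1 * x + al3)) ^+ 2 == dl x]|.
have hS : #|[set P : 'F_l * 'F_l | P.2 ^+ 2 + al1 * P.1 * P.2 + al3 * P.2
            == P.1 ^+ 3 + al2 * P.1 ^+ 2 + al4 * P.1 + al6]| = (\sum_x c x)%N.
  rewrite -sum1_card.
  rewrite (eq_bigl (fun P : 'F_l * 'F_l => P.2 ^+ 2 + al1 * P.1 * P.2 + al3 * P.2
            == P.1 ^+ 3 + al2 * P.1 ^+ 2 + al4 * P.1 + al6)); last by move=> P; rewrite inE.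
  rewrite -(pair_big_dep xpredT (fun x y => y ^+ 2 + al1 * x * y + al3 * y
            == x ^+ 3 + al2 * x ^+ 2 + al4 * x + al6) (fun _ _ => 1%N)) /=.
  apply: eq_bigr => x _; rewrite /c -sum1_card; apply: eq_bigl => y; rewrite inE.
  rewrite -subr_eq0 -[X in _ = X]subr_eq0.
  have -> : (2 * y + (al1 * x + al3)) ^+ 2 - dl x = 4 * (y ^+ 2 + al1 * x * y + al3 * y
       - (x ^+ 3 + al2 * x ^+ 2 + al4 * x + al6)) by rewrite /dl; ring.
  by rewrite mulf_eq0 (negbTE h4).
pose s3 := [:: e1; e2; e3].
have us3 : uniq s3 by rewrite /s3 /= !inE negb_or h12 h13 h23.
have cin : forall x, x \in s3 -> c x = 1%N.
  move=> x hx; apply: (proj1 (@sqcount _ (al1 * x + al3) (dl x) h2)).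
  rewrite /dl hd; move: hx; rewrite !inE => /orP [/eqP->|/orP [/eqP->|/eqP->]];
    by rewrite !mulf_eq0 !subr_eq0 !eqxx ?orbT.
have cout : forall x, x \notin s3 -> (c x = 2 * (c x %/ 2))%N /\ (c x %/ 2 <= 1)%N.
  move=> x hx; have : dl x != 0.
    move: hx; rewrite /dl hd !inE !negb_or => /and3P [n1 n2 n3].
    by rewrite !mulf_neq0 // subr_eq0.
  case/(proj2 (@sqcount _ (al1 * x + al3) (dl x) h2)); rewrite -/(c x) => ->; by [].
rewrite (_ : #|_| = \sum_x c x)%N; last exact: hS.
rewrite (bigID (fun x => x \in s3)) /=.
have -> : (\sum_(x | x \in s3) c x = 3)%N.
  rewrite (eq_bigr (fun _ => 1%N)) ?sum1_card; last by move=> x; apply: cin.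
  by move/card_uniqP: us3.
have -> : (\sum_(x | x \notin s3) c x = 2 * \sum_(x | x \notin s3) (c x %/ 2))%N.
  rewrite big_distrr /=; apply: eq_bigr => x hx; exact: (proj1 (cout x hx)).
have hk : (\sum_(x | x \notin s3) (c x %/ 2) <= l - 3)%N.
  apply: (@leq_trans (\sum_(x | x \notin s3) 1)%N).
    by apply: leq_sum => x hx; exact: (proj2 (cout x hx)).
  rewrite sum1_card.
  have := cardC (mem s3); rewrite card_Fp //.
  move/card_uniqP: us3 => -> /=.
  move=> e.
  have hAB : #|(fun i : 'F_l => i \notin s3)| = #|[predC fun x0 : 'F_l => [|| x0 == e1, x0 == e2, x0 == e3 | false]]|.
    by apply/eq_card => x; rewrite !inE.
  move/(congr1 (fun n => n - 3)%N): e; rewrite addKn => e'.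
  by rewrite hAB e'.
move: hk; set k := (\sum_(x | x \notin s3) _)%N => hk.
have -> : ((3 + 2 * k).+1 = 2 * (k + 2))%N by lia.
rewrite Euclid_dvdM // negb_or; apply/andP; split.
  have := @my_gt2 l pl ol => hg.
  apply/negP => /(dvdn_leq (isT : (0 < 2)%N)) hl2; lia.
have := @my_gt2 l pl ol => hg.
apply/negP => /dvdn_leq hl.
have : (l <= k + 2)%N by apply: hl; lia.
lia.
Qed.

Lemma logn2_odd (x : nat) : ~~ (2 %| x)%N -> logn 2 x = 0%N.
Proof. by move=> h; apply: logn_coprime; rewrite coprime2n; rewrite dvdn2 negbK in h.
Qed.

Lemma no_good2 (dl u : rat) (K : nat) : u != 0 -> odd K ->
  integral_at 2 dl -> ~~ (2 %| `|numq dl|)%N ->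
  dl * u ^+ 12 = 64 * (K%:R) ^+ 2 -> False.
Proof.
move=> u0 oK hi hn e.
pose N := numq dl; pose M := denq dl; pose m := numq u; pose n := denq u.
have m0 : m != 0 by rewrite numq_eq0.
have eZ : (N * m ^+ 12 = 64 * (K%:Z) ^+ 2 * M * n ^+ 12)%R.
  apply: (@intr_inj rat); rewrite !intrM.
  rewrite /N /M /m /n !numqE.
  transitivity ((dl * u ^+ 12) * (denq dl)%:~R * (denq u)%:~R ^+ 12 : rat); first by ring.
  rewrite e; ring.
have N0 : (0 < `|N|)%N.
  rewrite absz_gt0 numq_eq0; apply/eqP => d0; move: e; rewrite d0 mul0r => /eqP.
  rewrite eq_sym mulf_eq0 /= expf_eq0 /= pnatr_eq0 => /eqP K0; by rewrite K0 in oK.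
have m0' : (0 < `|m|)%N by rewrite absz_gt0.
have n0' : (0 < `|n|)%N by rewrite absz_gt0 denq_neq0.
have M0 : (0 < `|M|)%N by rewrite absz_gt0 denq_neq0.
have K0 : (0 < K)%N by case: (K) oK.
have := congr1 (logn 2) (congr1 absz eZ); rewrite /= !abszM.
rewrite !lognM ?muln_gt0 ?m0' ?n0' ?M0 ?K0 ?N0 //.
rewrite (@logn2_odd _ hn) (@logn2_odd _ hi) (@logn2_odd K); last by rewrite dvdn2 negbK.
rewrite (_ : logn 2 `|64%R| = 6%N) //; lia.
Qed.

Ltac zl := repeat match goal with
 | |- is_true (prime _) => assumption
 | |- is_true (integral_at _ (_ + _)) => apply: Zl_add
 | |- is_true (integral_at _ (_ * _)) => apply: Zl_mul
 | |- is_true (integral_at _ (- _)) => apply: Zl_opp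
 | |- is_true (integral_at _ (_ ^+ _)) => apply: Zl_exp
 | |- is_true (integral_at _ (_ %:R)) => apply: Zl_nat
 | |- is_true (integral_at _ _) => assumption
end.

Lemma Zl_disc (l : nat) (E : wmodel) : prime l ->
  integral_at l (wa1 E) -> integral_at l (wa2 E) -> integral_at l (wa3 E) ->
  integral_at l (wa4 E) -> integral_at l (wa6 E) -> integral_at l (wdisc E).
Proof. move=> *; rewrite /wdisc; cbv zeta; zl. Qed.


Lemma root_int (l : nat) (E' : wmodel) (e1 e2 e3 c : rat) : prime l -> odd l ->
  integral_at l (wa1 E') -> integral_at l (wa2 E') -> integral_at l (wa3 E') ->
  integral_at l (wa4 E') -> integral_at l (wa6 E') ->
  (forall X : rat,
  (wa1 E' * X + wa3 E') ^+ 2 + 4 * (X ^+ 3 + wa2 E' * X ^+ 2 + wa4 E' * X + wa6 E')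
  = 4 * ((X - e1) * (X - e2) * (X - e3))) ->
  c = e1 \/ c = e2 \/ c = e3 -> integral_at l c.
Proof.
move=> pl ol g1 g2 g3 g4 g6 K hc.
apply: (@Zl_root l 4 c (wa1 E' ^+ 2 + 4 * wa2 E') (2 * wa1 E' * wa3 E' + 4 * wa4 E')
          (wa3 E' ^+ 2 + 4 * wa6 E') pl); try by zl.
  have := @my_gt2 l pl ol => hg.
  rewrite (_ : 4 = 2 * 2)%N // Euclid_dvdM // orbb.
  apply/negP => /(dvdn_leq (isT : (0 < 2)%N)); lia.
transitivity ((wa1 E' * c + wa3 E') ^+ 2 + 4 * (c ^+ 3 + wa2 E' * c ^+ 2 + wa4 E' * c + wa6 E')).
  by ring.
by rewrite K; case: hc => [->|[->|->]]; ring.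
Qed.

Lemma redF_neq0 (l : nat) (c : rat) : prime l -> integral_at l c ->
  ~~ (l %| `|numq c|)%N -> redF l c != 0.
Proof.
move=> pl hc hn; rewrite /redF mulf_neq0 ?invr_eq0 ?intr_Fp_eq0 //.
Qed.

Lemma odd_prod (Ds : seq nat) : all odd Ds -> odd (\prod_(d <- Ds) d).
Proof.
elim: Ds => [|d Ds IH] /=; first by rewrite big_nil.
by case/andP => od oD; rewrite big_cons oddM od IH.
Qed.

Theorem proposition2p4 (p q : nat) (eps : rat) (Ds : seq nat) :
  prime p -> prime q -> odd p -> odd q -> q = (p + 2)%N ->
  (eps = 1 \/ eps = -1) ->
  uniq Ds -> all prime Ds -> all odd Ds ->
  coprime (p * q) (\prod_(d <- Ds) d) ->
  forall l : nat, ~ anomalous (E_D eps p q (\prod_(d <- Ds) d)) l.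
Proof.
move=> pp pq op oq hq heps _ _ oDs _ l [pl [E' [[u [r [s [t [u0 H]]]]] [good hdiv]]]].
have oD := @odd_prod Ds oDs.
move: H oD; set D := (\prod_(d <- Ds) d) => H oD.
pose a : rat := eps * p%:R * D%:R.
pose b : rat := eps * q%:R * D%:R.
have e2 : eps ^+ 2 = 1 by case: heps => ->; rewrite ?expr1n ?sqrrN ?expr1n.
have hE : E_D eps p q D = WModel 0 (a + b) 0 (a * b) 0.
  rewrite /E_D /a /b; congr WModel; rewrite ?natrD ?natrM.
    by ring.
  transitivity (eps ^+ 2 * p%:R * q%:R * D%:R ^+ 2); last by ring.
  by rewrite e2; ring.
rewrite hE in H.
have K := @key_id a b u r s t E' u0 H.
move: K.
set e1 := (- r) / u ^+ 2; set e3' := (- a - r) / u ^+ 2; set e3 := (- b - r) / u ^+ 2.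
move=> K.
have hdisc := @disc_roots E' _ _ _ K.
have hdu : wdisc E' * u ^+ 12 = 64 * ((p * q * D ^ 3)%N%:R) ^+ 2.
  rewrite hdisc /e1 /e3' /e3 /a /b hq !natrM natrD.
  transitivity (64 * (eps ^+ 2) ^+ 3 * (p%:R * (p%:R + 2) * (D%:R * (D%:R * D%:R))) ^+ 2 : rat).
    by field.
  by rewrite e2 expr1n mulr1.
clearbody e1 e3' e3.
case/andP: good => g1 /andP [g2 /andP [g3 /andP [g4 /andP [g6 gd]]]].
have hid := @Zl_disc l E' pl g1 g2 g3 g4 g6.
case: (even_prime pl) => [l2 | ol].
  rewrite l2 in hid gd.
  apply: (@no_good2 (wdisc E') u (p * q * D ^ 3) u0 _ hid gd hdu).
  by rewrite !oddM op oq oD.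
have i1 : integral_at l e1 by apply: (@root_int l E' e1 e3' e3); auto.
have i2 : integral_at l e3' by apply: (@root_int l E' e1 e3' e3); auto.
have i3 : integral_at l e3 by apply: (@root_int l E' e1 e3' e3); auto.
case: (@vieta E' _ _ _ K) => V2 V4 V6.
have R2 : redF l (wa1 E') ^+ 2 + 4 * redF l (wa2 E') = - 4 * (redF l e1 + redF l e3' + redF l e3).
  have := congr1 (redF l) V2.
  rewrite !(redF_nat, redF_opp, redF_add, redF_mul, redF_exp); first by [].
  all: zl.
have R4 : 2 * redF l (wa4 E') + redF l (wa1 E') * redF l (wa3 E') =
   2 * (redF l e1 * redF l e3' + redF l e1 * redF l e3 + redF l e3' * redF l e3).
  have := congr1 (redF l) V4.
  rewrite !(redF_nat, redF_opp, redF_add, redF_mul, redF_exp); first by [].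
  all: zl.
have R6 : redF l (wa3 E') ^+ 2 + 4 * redF l (wa6 E') = - 4 * (redF l e1 * redF l e3' * redF l e3).
  have := congr1 (redF l) V6.
  rewrite !(redF_nat, redF_opp, redF_add, redF_mul, redF_exp); first by [].
  all: zl.
have Kb : forall x : 'F_l,
  (redF l (wa1 E') * x + redF l (wa3 E')) ^+ 2 + 4 * (x ^+ 3 + redF l (wa2 E') * x ^+ 2
     + redF l (wa4 E') * x + redF l (wa6 E'))
  = 4 * ((x - redF l e1) * (x - redF l e3') * (x - redF l e3)).
  move=> x; apply/eqP; rewrite -subr_eq0.
  set A1 := redF l (wa1 E'); set A2 := redF l (wa2 E'); set A3 := redF l (wa3 E').
  set A4 := redF l (wa4 E'); set A6 := redF l (wa6 E').
  set f1 := redF l e1; set f2 := redF l e3'; set f3 := redF l e3.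
  have -> : (A1 * x + A3) ^+ 2 + 4 * (x ^+ 3 + A2 * x ^+ 2 + A4 * x + A6)
    - 4 * ((x - f1) * (x - f2) * (x - f3)) =
    x ^+ 2 * ((A1 ^+ 2 + 4 * A2) - - 4 * (f1 + f2 + f3))
    + 2 * x * ((2 * A4 + A1 * A3) - 2 * (f1 * f2 + f1 * f3 + f2 * f3))
    + ((A3 ^+ 2 + 4 * A6) - - 4 * (f1 * f2 * f3)) by ring.
  by rewrite R2 R4 R6 !subrr !mulr0 !addr0.
have hD0 := @redF_neq0 l (wdisc E') pl hid gd.
rewrite hdisc in hD0.
rewrite !(redF_nat, redF_opp, redF_add, redF_mul, redF_exp) in hD0; try by zl.
have d12 : redF l e1 != redF l e3'.
  by apply/eqP => e; move/eqP: hD0; apply; rewrite e subrr !mul0r expr2 mul0r mulr0.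
have d13 : redF l e1 != redF l e3.
  by apply/eqP => e; move/eqP: hD0; apply; rewrite e subrr mulr0 mul0r expr2 mul0r mulr0.
have d23 : redF l e3' != redF l e3.
  by apply/eqP => e; move/eqP: hD0; apply; rewrite e subrr mulr0 expr2 mul0r mulr0.
move: hdiv; rewrite /npoints; apply/negP.
exact: (@count_main l _ _ _ _ _ _ _ _ pl ol d12 d13 d23 Kb).
Qed.
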